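(* Let $q$ be odd, $G=\Omega_{2m+1}(q)$ with natural module $V$, and let $g\in G$ be regular semisimple. Then $g$ centralizes a nondegenerate $1$-space and $\dim C_V(g)=1$. Moreover, either $g$ stabilizes no other nondegenerate $1$-space, or $g$ acts as $-1$ on a nondegenerate $2$-space and stabilizes no other nondegenerate $1$-space.
   Context: $\Omega_{2m+1}(q)$ is the derived subgroup (of index $2$) of $\mathrm{SO}_{2m+1}(q)$ acting on a $(2m+1)$-dimensional $\mathbb F_q$-space with nondegenerate quadratic form. An element is regular semisimple if it is semisimple and its centralizer in the ambient algebraic group has connected component a maximal torus; equivalently it commutes with no nontrivial unipotent element. *)

(* Defs.v *)
From HB Require Import structures.
From mathcomp Require Import all_boot all_order all_algebra all_fingroup all_field.
Set Implicit Arguments. Unset Strict Implicit. Unset Printing Implicit Defensive.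
Import GRing.Theory.
Local Open Scope ring_scope.

(* Conventions: V = 'rV[F]_n (row vectors), a matrix g acts by v |-> v *m g.
   Since q is odd, a nondegenerate quadratic form on V is Q(v) = v B v^T with
   B symmetric and invertible (polar form 2B); we work with B. *)

Definition isometry (R : comNzRingType) n (B g : 'M[R]_n) : Prop :=
  g *m B *m g^T = B.

Definition qform (R : comNzRingType) n (B : 'M[R]_n) (v : 'rV[R]_n) : R :=
  (v *m B *m v^T) 0 0.

Definition SO_set (F : finFieldType) n (B : 'M[F]_n.+1) : {set {'GL_n.+1[F]}} :=
  [set g : {'GL_n.+1[F]} | (GLval g *m B *m (GLval g)^T == B) && (\det (GLval g) == 1)].

Definition Omega_set (F : finFieldType) n (B : 'M[F]_n.+1) : {set {'GL_n.+1[F]}} :=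
  ([~: SO_set B, SO_set B])%g.

Definition closureF (F : finFieldType) : countClosedFieldType :=
  projT1 (countable_algebraic_closure F).
Definition toClosure (F : finFieldType) : {rmorphism F -> closureF F} :=
  proj1_sig (projT2 (countable_algebraic_closure F)).

Definition unipotent (K : fieldType) n (u : 'M[K]_n) : Prop :=
  exists k : nat, (u - 1%:M) ^+ k = 0.

(* g is regular semisimple in the algebraic group SO(B)(\bar F):
   semisimple (diagonalizable over \bar F) and commuting with no nontrivial
   unipotent element of SO(B)(\bar F). *)
Definition regular_semisimple (F : finFieldType) n (B g : 'M[F]_n) : Prop :=
  let f := toClosure F in
  diagonalizable (map_mx f g) /\
  forall u : 'M[closureF F]_n,
    isometry (map_mx f B) u -> \det u = 1 -> unipotent u ->
    u *m map_mx f g = map_mx f g *m u -> u = 1%:M.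

Definition fixed_space (F : fieldType) n (g : 'M[F]_n) : 'M[F]_n := kermx (g - 1%:M).

Definition stab_nondeg_line (F : fieldType) n (B g : 'M[F]_n) (v : 'rV[F]_n) : Prop :=
  v != 0 /\ qform B v != 0 /\ (v *m g <= v)%MS.

(* Main.v *)
Require Import Defs.
From HB Require Import structures.
From mathcomp Require Import all_boot all_order all_algebra all_fingroup all_field.
From mathcomp Require Import ring zify.
From Stdlib Require Import Classical.
From mathcomp Require Import cyclic.
Import GRing.Theory.
Local Open Scope ring_scope.

Section Gen.
Variable R : fieldType.
Variable n : nat.
Implicit Types (u v w : 'rV[R]_n) (X Y : 'M[R]_n).

Definition bil (B : 'M[R]_n) u v := (u *m B *m v^T) 0 0.

Lemma bil_mx B u v : u *m B *m v^T = (bil B u v)%:M.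
Proof. exact: mx11_scalar. Qed.

Lemma bilDl B u u' v : bil B (u + u') v = bil B u v + bil B u' v.
Proof. by rewrite /bil !mulmxDl mxE. Qed.
Lemma bilDr B u v v' : bil B u (v + v') = bil B u v + bil B u v'.
Proof. by rewrite /bil linearD /= mulmxDr mxE. Qed.
Lemma bilZl B a u v : bil B (a *: u) v = a * bil B u v.
Proof. by rewrite /bil -!scalemxAl mxE. Qed.
Lemma bilZr B a u v : bil B u (a *: v) = a * bil B u v.
Proof. by rewrite /bil linearZ /= -scalemxAr mxE. Qed.
Lemma bilNl B u v : bil B (- u) v = - bil B u v.
Proof. by rewrite -scaleN1r bilZl mulN1r. Qed.
Lemma bilNr B u v : bil B u (- v) = - bil B u v.
Proof. by rewrite -scaleN1r bilZr mulN1r. Qed.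
Lemma bilBl B u u' v : bil B (u - u') v = bil B u v - bil B u' v.
Proof. by rewrite bilDl bilNl. Qed.
Lemma bilBr B u v v' : bil B u (v - v') = bil B u v - bil B u v'.
Proof. by rewrite bilDr bilNr. Qed.
Lemma bil0l B v : bil B 0 v = 0.
Proof. by rewrite /bil !mul0mx mxE. Qed.
Lemma bil0r B v : bil B v 0 = 0.
Proof. by rewrite /bil trmx0 mulmx0 mxE. Qed.

Lemma bil_sym B u v : B^T = B -> bil B u v = bil B v u.
Proof.
move=> sB; rewrite /bil; transitivity ((u *m B *m v^T)^T 0 0); first by rewrite [RHS]mxE.
by rewrite !trmx_mul trmxK sB mulmxA.
Qed.

Lemma bil_iso B X u v : X *m B *m X^T = B ->
  bil B (u *m X) (v *m X) = bil B u v.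
Proof.
move=> iso; rewrite /bil trmx_mul.
have -> : u *m X *m B *m (X^T *m v^T) = u *m (X *m B *m X^T) *m v^T by rewrite !mulmxA.
by rewrite iso.
Qed.

Lemma rank1_act B v (x e : 'rV[R]_n) : v *m (B *m x^T *m e) = bil B v x *: e.
Proof. by rewrite !mulmxA bil_mx mul_scalar_mx. Qed.

Lemma row_ext X Y : (forall v, v *m X = v *m Y) -> X = Y.
Proof.
by move=> H; apply/row_matrixP => i; rewrite !rowE H.
Qed.

Lemma bil_ext X Y : (forall v w, (v *m X *m w^T) 0 0 = (v *m Y *m w^T) 0 0) -> X = Y.
Proof.
move=> H; apply/matrixP => i j.
have := H (delta_mx 0 i) (delta_mx 0 j).
by rewrite trmx_delta -!rowE -!colE !mxE.
Qed.

Lemma vec_ext v w : (forall x : 'rV[R]_n, (v *m x^T) 0 0 = (w *m x^T) 0 0) -> v = w.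
Proof.
move=> H; apply/rowP => j.
have := H (delta_mx 0 j).
by rewrite trmx_delta -!colE !mxE.
Qed.

Lemma det1_rank1 (c : 'cV[R]_n) (r : 'rV[R]_n) :
  \det (1%:M + c *m r) = 1 + (r *m c) 0 0.
Proof.
pose M := block_mx (1%:M : 'M[R]_1) (- r) c 1%:M.
have e1 : M = block_mx 1%:M 0 c 1%:M *m block_mx 1%:M (- r) 0 (1%:M + c *m r).
  rewrite mulmx_block /M !mulmx0 !mul0mx !mulmx1 !mul1mx ?addr0 ?add0r.
  by rewrite mulmxN (addrC (- _)) addrK.
have e2 : M = block_mx (1%:M + r *m c) (- r) 0 1%:M *m block_mx 1%:M 0 c 1%:M.
  rewrite mulmx_block /M !mulmx0 !mul0mx !mulmx1 !mul1mx ?addr0 ?add0r.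
  by rewrite mulNmx addrK.
have := congr1 determinant e2; rewrite {1}e1 !det_mulmx !det_lblock !det_ublock !det1 !mul1r !mulr1 => ->.

by rewrite det_mx11 !mxE eqxx.
Qed.


Lemma pick_vec m1 m2 (S : 'M[R]_(m1, n)) (A : 'M[R]_(m2, n)) :
  (\rank A < \rank S)%N -> exists2 v : 'rV[R]_n, (v <= S)%MS & ~~ (v <= A)%MS.
Proof.
move=> lt; have: ~~ (S <= A)%MS.
  by apply/negP => /mxrankS; rewrite leqNgt lt.
case/row_subPn => i Hi; exists (row i S) => //; exact: row_sub.
Qed.

Lemma diag_P1 (X : 'M[R]_n) eps : diagonalizable X ->
  forall v : 'rV[R]_n, v *m (X - eps%:M) *m (X - eps%:M) = 0 -> v *m (X - eps%:M) = 0.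
Proof.
case=> P Pu /(similar_diagLR Pu) [D]; rewrite conjVmx // => ->.
pose d := D - const_mx eps.
have eE : invmx P *m diag_mx D *m P - eps%:M = invmx P *m diag_mx d *m P.
  rewrite /d linearB /= diag_const_mx mulmxBr mulmxBl mul_mx_scalar -scalemxAl mulVmx //.
  by rewrite scalemx1.
move=> v; rewrite eE.
set w := v *m invmx P.
have -> : forall Y : 'M[R]_n, v *m (invmx P *m Y *m P) = w *m Y *m P.
  by move=> Y; rewrite /w !mulmxA.
have -> : w *m diag_mx d *m P *m (invmx P *m diag_mx d *m P) = w *m diag_mx d *m diag_mx d *m P.
  by rewrite !mulmxA (mulmxK Pu).
move=> H; have {}H : w *m diag_mx d *m diag_mx d = 0.
  by rewrite -[LHS](mulmxK Pu) H mul0mx.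
suff -> : w *m diag_mx d = 0 by rewrite mul0mx.
apply/rowP => j; have := congr1 (fun M : 'M[R]_(1,n) => M 0 j) H.
rewrite !mul_mx_diag !mxE => /eqP; rewrite mulf_eq0 => /orP [/eqP -> //|/eqP ->].
by rewrite mulr0.
Qed.

Lemma P1mat (D : 'M[R]_n) :
  (forall v : 'rV[R]_n, v *m D *m D = 0 -> v *m D = 0) ->
  forall m (Z : 'M[R]_(m, n)), Z *m D *m D = 0 -> Z *m D = 0.
Proof.
move=> H m Z HZ; apply/row_matrixP => i; rewrite row_mul row0; apply: H.
by rewrite -!row_mul HZ row0.
Qed.

Section Orth.
Variable B : 'M[R]_n.
Hypotheses (sB : B^T = B) (uB : B \in unitmx) (two : (2 : R) != 0).

Lemma det_plus1 H : H *m B *m H^T = B -> \det (H + 1%:M) = \det H * \det (H + 1%:M).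
Proof.
move=> iso.
have e : H + 1%:M = H *m B *m (1%:M + H^T) *m invmx B.
  by rewrite mulmxDr mulmx1 iso mulmxDl mulmxK // mulmxV.
rewrite {1}e !det_mulmx det_inv.
have -> : 1%:M + H^T = (H + 1%:M)^T by rewrite linearD /= trmx1 addrC.
have dB : \det B != 0 by rewrite -unitfE -unitmxE.
by rewrite det_tr; field.

Qed.

Lemma det_minus1 H : H *m B *m H^T = B -> \det H = 1 -> odd n -> \det (H - 1%:M) = 0.
Proof.
move=> iso dH on.
have e : H - 1%:M = H *m B *m (1%:M - H^T) *m invmx B.
  by rewrite mulmxBr mulmx1 iso mulmxBl mulmxK // mulmxV.
have : \det (H - 1%:M) = - \det (H - 1%:M).
  rewrite {1}e !det_mulmx det_inv dH mul1r.
  have -> : 1%:M - H^T = (- 1) *: (H - 1%:M)^T.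
    by rewrite linearB /= trmx1 scaleN1r opprB.
  rewrite detZ det_tr -signr_odd on expr1 mulN1r.
  by rewrite mulrC mulrA mulVf ?mul1r // -unitfE -unitmxE.
move/eqP; rewrite -subr_eq0 opprK -mulr2n -mulr_natr mulf_eq0 (negPf two) orbF.
by move/eqP.
Qed.


Definition refl (w : 'rV[R]_n) : 'M[R]_n := 1%:M - (2 / bil B w w) *: (B *m w^T *m w).

Lemma refl_act v w : v *m refl w = v - (2 / bil B w w * bil B v w) *: w.
Proof. by rewrite /refl mulmxBr mulmx1 -scalemxAr rank1_act scalerA. Qed.

Lemma iso_bil X : (forall v z, bil B (v *m X) (z *m X) = bil B v z) -> X *m B *m X^T = B.
Proof.
move=> H; apply: bil_ext => v z.
have -> : v *m (X *m B *m X^T) *m z^T = (v *m X) *m B *m (z *m X)^T.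
  by rewrite trmx_mul !mulmxA.
exact: H.
Qed.

Lemma iso_mul X Y : X *m B *m X^T = B -> Y *m B *m Y^T = B -> (X *m Y) *m B *m (X *m Y)^T = B.
Proof.
move=> hX hY; rewrite trmx_mul.
have -> : X *m Y *m B *m (Y^T *m X^T) = X *m (Y *m B *m Y^T) *m X^T by rewrite !mulmxA.
by rewrite hY.
Qed.

Lemma refl_iso w : bil B w w != 0 -> refl w *m B *m (refl w)^T = B.
Proof.
move=> qw; apply: iso_bil => v z; rewrite !refl_act.
rewrite !(bilBl, bilBr, bilZl, bilZr) (@bil_sym B w z sB).
by field.
Qed.

Lemma refl_det w : bil B w w != 0 -> \det (refl w) = -1.
Proof.
move=> qw.
have -> : refl w = 1%:M + (- (2 / bil B w w) *: (B *m w^T)) *m w.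
  by rewrite /refl -scalemxAl scaleNr.
rewrite det1_rank1 -scalemxAr mxE mulmxA -/(bil B w w).
by field.
Qed.

Lemma eigE X eps v : (v *m (X - eps%:M) == 0) = (v *m X == eps *: v).
Proof. by rewrite mulmxBr mul_mx_scalar subr_eq0. Qed.

Lemma ker_orth X eps a y : X *m B *m X^T = B -> eps * eps = 1 -> a *m X = eps *: a ->
  bil B a (y *m (X - eps%:M)) = 0.
Proof.
move=> iso ee aX.
rewrite mulmxBr mul_mx_scalar bilBr bilZr.
have ea : a = eps *: (a *m X) by rewrite aX scalerA ee scale1r.
by rewrite {1}ea bilZl bil_iso // subrr.
Qed.

Lemma nondeg_ker X eps a : X *m B *m X^T = B -> eps * eps = 1 ->
  (forall v : 'rV[R]_n, v *m (X - eps%:M) *m (X - eps%:M) = 0 -> v *m (X - eps%:M) = 0) ->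
  a *m (X - eps%:M) = 0 ->
  (forall s : 'rV[R]_n, (s <= kermx (X - eps%:M))%MS -> bil B a s = 0) -> a = 0.
Proof.
move=> iso ee H1 aD Hs.
set D := X - eps%:M in H1 aD Hs.
have cap0 : (kermx D :&: D)%MS = 0.
  have /submxP [Z eZ] := capmxSr (kermx D) D.
  have : (kermx D :&: D)%MS *m D = 0 by apply/sub_kermxP; exact: capmxSl.
  by rewrite eZ => /(@P1mat D H1 _ Z) ->.
have full : (1%:M <= kermx D + D)%MS.
  by rewrite sub1mx /row_full mxrank_disjoint_sum // mxrank_ker subnK // rank_leq_row.
suff aB0 : a *m B = 0 by rewrite -[a](mulmxK uB) aB0 mul0mx.
apply: vec_ext => y.
have : (y <= kermx D + D)%MS := submx_trans (submx1 y) full.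
case/sub_addsmxP => [[u1 u2] /= ->].
transitivity (bil B a (u1 *m kermx D + u2 *m D)); first by [].
rewrite mul0mx mxE.
have aX : a *m X = eps *: a by apply/eqP; rewrite -eigE aD.
by rewrite bilDr Hs ?submxMl // ker_orth // add0r.
Qed.

Lemma exists_nonorth e : e != 0 -> exists v : 'rV[R]_n, bil B v e != 0.
Proof.
move=> e0.
case: (pickP (fun j : 'I_n => (e *m B) 0 j != 0)) => [j Hj | Hn].
  exists (delta_mx 0 j); rewrite (@bil_sym B _ _ sB) /bil trmx_delta -colE mxE //.
exfalso; move/negP: e0; apply; apply/eqP.
rewrite -[e](mulmxK uB); suff -> : e *m B = 0 by rewrite mul0mx.
by apply/rowP => j; move: (Hn j) => /= /negbFE /eqP ->; rewrite mxE.
Qed.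

Lemma unip_core X eps (e x : 'rV[R]_n) : X *m B *m X^T = B -> eps * eps = 1 ->
  e *m X = eps *: e -> x *m X = eps *: x -> bil B e e = 0 -> bil B e x = 0 ->
  e != 0 -> ~~ (x <= e)%MS ->
  exists u : 'M[R]_n, [/\ u *m B *m u^T = B, \det u = 1, (u - 1%:M) ^+ 3 = 0,
                        u *m X = X *m u & u != 1%:M].
Proof.
move=> iso ee eX xX ee0 ex0 e0 xe.
have xe0 : bil B x e = 0 by rewrite (@bil_sym B _ _ sB).
set c := bil B x x / 2.
set M := B *m x^T *m e - B *m e^T *m x - c *: (B *m e^T *m e).
have actM : forall v, v *m M = bil B v x *: e - bil B v e *: x - (c * bil B v e) *: e.
  by move=> v; rewrite /M !mulmxBr -scalemxAr !rank1_act scalerA.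
clearbody M.
have eM : e *m M = 0 by rewrite actM ee0 ex0 !scale0r mulr0 scale0r !subr0.
have xM : x *m M = bil B x x *: e by rewrite actM xe0 !scale0r mulr0 scale0r !subr0.
have MMM : M *m M *m M = 0.
  apply: row_ext => v; rewrite !mulmxA mulmx0 (actM v) !mulmxBl -!scalemxAl eM xM !mul0mx -scalemxAl eM !scaler0 !subr0.
  by [].
exists (1%:M + M).
have uM : 1%:M + M - 1%:M = M by rewrite addrC addKr.
have iu : (1%:M + M) *m B *m (1%:M + M)^T = B.
  apply: iso_bil => v z; rewrite !mulmxDr !mulmx1 !actM.
  rewrite !(bilDl, bilDr, bilNl, bilNr, bilZl, bilZr) ?ee0 ?ex0 ?xe0.
  rewrite ?(@bil_sym B e z sB) ?(@bil_sym B x z sB) ?(@bil_sym B e v sB) ?(@bil_sym B x v sB) /c.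
  by field.
split => //.
- apply/eqP; have Hd := det_plus1 _ iu.
  have : \det (1%:M + M + 1%:M) * (1 - \det (1%:M + M)) = 0.
    by rewrite mulrBr mulr1 {1}Hd mulrC subrr.
  move/eqP; rewrite mulf_eq0 subr_eq0 => /orP [|/eqP <- //].
  case/det0P => v v0; rewrite mulmxDr mulmx1 mulmxDr mulmx1 => H.
  have vM : v *m M = - (2 : R) *: v.
    apply: (addIr (v + v)); rewrite scaleNr scaler_nat mulr2n addNr -H.
    by rewrite addrCA addrA.
  have : v *m M *m M *m M = 0 by rewrite -!mulmxA (mulmxA M) MMM mulmx0.
  rewrite vM -!scalemxAl vM -scalemxAl vM !scalerA => /eqP.
  by rewrite scaler_eq0 (negPf v0) orbF !mulf_eq0 oppr_eq0 (negPf two).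
- rewrite uM !exprS expr0 mulr1 -!mulmxE mulmxA.
  exact: MMM.
- apply: row_ext => v; rewrite !mulmxA mulmxDr mulmx1 mulmxDl mulmxDr mulmx1 !actM.
  rewrite !mulmxBl -!scalemxAl eX xX.
  have bx : bil B (v *m X) x = eps * bil B v x.
    by rewrite -{1}(scale1r x) -ee -scalerA -xX bilZr bil_iso.
  have be : bil B (v *m X) e = eps * bil B v e.
    by rewrite -{1}(scale1r e) -ee -scalerA -eX bilZr bil_iso.
  rewrite bx be !scalerA.
  by rewrite [eps * bil B v x]mulrC [eps * bil B v e]mulrC mulrA [_ * eps]mulrC.
- apply/negP => /eqP u1.
  have [v hv] := exists_nonorth _ e0.
  have : v *m M = 0.
    by have := congr1 (mulmx v) u1; rewrite mulmxDr mulmx1 => /eqP; rewrite addrC -subr_eq0 addrK => /eqP.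
  rewrite actM => /eqP; rewrite -addrA -opprD subr_eq0 => /eqP H.
  move/negP: xe; apply.
  have -> : x = (bil B v e)^-1 *: ((bil B v x *: e) - (c * bil B v e) *: e).
    by rewrite H addrK scalerA mulVf // scale1r.
  by apply: scalemx_sub; rewrite -scalerBl scalemx_sub.
Qed.

Lemma line_span (w : 'rV[R]_n) m (S : 'M[R]_(m, n)) :
  (w <= S)%MS -> w != 0 -> \rank S = 1%N -> (S <= w)%MS.
Proof.
move=> wS w0 r1; move: (mxrank_leqif_eq wS).2; rewrite rank_rV w0 r1 eqxx.
by move/esym/andP => [].
Qed.

Lemma kerp1_not1 X : X *m B *m X^T = B -> \det X = 1 ->
  (forall v : 'rV[R]_n, v *m (X - (-1)%:M) *m (X - (-1)%:M) = 0 -> v *m (X - (-1)%:M) = 0) ->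
  \rank (kermx (X - (-1)%:M)) != 1%N.
Proof.
move=> iso dX H1; apply/negP => /eqP r1.
set D := X - (-1)%:M in H1 r1.
have ee : (-1 : R) * -1 = 1 by rewrite mulN1r opprK.
have [|w wK w0] := @pick_vec n n (kermx D) 0; first by rewrite mxrank0 r1.
rewrite submx0 in w0.
have Kw := @line_span w _ _ wK w0 r1.
have wD : w *m D = 0 by apply/sub_kermxP.
have wX : w *m X = - w by apply/eqP; rewrite -scaleN1r -eigE wD.
have qw : bil B w w != 0.
  apply/negP => /eqP qw; move/negP: w0; apply; apply/eqP.
  apply: (@nondeg_ker X (-1) w iso ee H1 wD) => s sK.
  have /sub_rVP [k ->] := submx_trans sK Kw.
  by rewrite bilZr qw mulr0.
set H := refl w *m X.
have iH : H *m B *m H^T = B by apply: iso_mul => //; apply: refl_iso.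
have dH : \det H = -1 by rewrite det_mulmx refl_det // dX mulr1.
have : \det (H + 1%:M) == 0.
  have := det_plus1 _ iH; rewrite dH mulN1r => /eqP.
  by rewrite -subr_eq0 opprK -mulr2n -mulr_natr mulf_eq0 (negPf two) orbF.
case/det0P => v v0; rewrite mulmxDr mulmx1 => /eqP; rewrite addr_eq0 => /eqP vH.
set al := 2 / bil B w w * bil B v w.
have vD : v *m D = - (al *: w).
  move: vH; rewrite /H mulmxA refl_act mulmxBl -scalemxAl wX => vH.
  rewrite /D mulmxBr mul_mx_scalar scaleN1r opprK.
  have vX : v *m X = - v - al *: w by rewrite -vH scalerN opprK /al addrK.
  by rewrite vX addrAC addNr add0r.
have vD0 : v *m D = 0.
  by apply: H1; rewrite vD mulNmx -scalemxAl wD scaler0 oppr0.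
move: vD; rewrite vD0 => /eqP; rewrite eq_sym oppr_eq0 scaler_eq0 (negPf w0) orbF.
rewrite /al mulf_eq0 mulf_eq0 invr_eq0 (negPf two) (negPf qw) /= => /eqP bvw.
move/negP: v0; apply; apply/eqP.
have vK : (v <= kermx D)%MS by apply/sub_kermxP.
have /sub_rVP [k ek] := submx_trans vK Kw.
move: bvw; rewrite ek bilZl => /eqP; rewrite mulf_eq0 (negPf qw) orbF => /eqP ->.
by rewrite scale0r.
Qed.

Lemma kerm1_is1 X : X *m B *m X^T = B -> \det X = 1 -> odd n ->
  (forall v : 'rV[R]_n, v *m (X - 1%:M) *m (X - 1%:M) = 0 -> v *m (X - 1%:M) = 0) ->
  (\rank (kermx (X - 1%:M)) <= 2)%N ->
  \rank (kermx (X - 1%:M)) = 1%N.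
Proof.
move=> iso dX on H1 le2.
set D := X - 1%:M in H1 le2 *.
have ee : (1 : R) * 1 = 1 by rewrite mulr1.
have r0 : \rank (kermx D) != 0%N.
  apply/negP => /eqP r0.
  have /eqP := det_minus1 _ iso dX on; case/det0P => v v0 vD.
  have : (v <= kermx D)%MS by apply/sub_kermxP.
  by move/eqP: r0; rewrite mxrank_eq0 => /eqP ->; rewrite submx0 (negPf v0).
suff r2 : \rank (kermx D) != 2%N.
  by move: r0 r2 le2; case: (\rank (kermx D)) => [|[|[|]]].
apply/negP => /eqP r2.
have Dv : forall v : 'rV[R]_n, v *m D = 0 -> v *m X = v.
  by move=> v vD; apply/eqP; rewrite -{2}(scale1r v) -eigE vD.
have [a aK qa] : exists2 a : 'rV[R]_n, (a <= kermx D)%MS & bil B a a != 0.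
  case: (classic (exists2 a : 'rV[R]_n, (a <= kermx D)%MS & bil B a a != 0)) => // Hno.
  exfalso.
  have q0 : forall y : 'rV[R]_n, (y <= kermx D)%MS -> bil B y y = 0.
    by move=> y yK; apply/eqP; apply: contraT => hy; exfalso; apply: Hno; exists y.
  have [|z zK z0] := @pick_vec n n (kermx D) 0; first by rewrite mxrank0 r2.
  rewrite submx0 in z0; move/negP: z0; apply; apply/eqP.
  apply: (@nondeg_ker X 1 z iso ee H1); first exact/sub_kermxP.
  move=> s sK; have := q0 (z + s) (addmx_sub zK sK).
  rewrite bilDl !bilDr (q0 z zK) (q0 s sK) add0r addr0 (@bil_sym B s z sB) -mulr2n.
  by move/eqP; rewrite -mulr_natl mulf_eq0 (negPf two) => /eqP.
set T := (kermx D :&: kermx (B *m a^T))%MS.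
have rT : (0 < \rank T)%N.
  have := mxrank_sum_cap (kermx D) (kermx (B *m a^T)).
  rewrite [\rank (kermx (B *m a^T))]mxrank_ker.
  have h1 := rank_leq_col (B *m a^T).
  have h2 := rank_leq_col (kermx D + kermx (B *m a^T))%MS.
  rewrite -/T r2 => e; lia.
have [|b bT b0] := @pick_vec n n T 0; first by rewrite mxrank0.
rewrite submx0 in b0.
have bK : (b <= kermx D)%MS := submx_trans bT (capmxSl _ _).
have ba : bil B b a = 0.
  have /sub_kermxP bBa := submx_trans bT (capmxSr _ _).
  by rewrite /bil -mulmxA bBa mxE.
have ab : bil B a b = 0 by rewrite (@bil_sym B a b sB).
have nba : ~~ (b <= a)%MS.
  apply/negP => /sub_rVP [k ek]; move/negP: b0; apply.
  move: ba; rewrite ek bilZl => /eqP; rewrite mulf_eq0 (negPf qa) orbF => /eqP ->.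
  by rewrite scale0r.
have a0 : a != 0 by apply/negP => /eqP a0; move: qa; rewrite a0 bil0l eqxx.
have abK : ((a + b)%MS <= kermx D)%MS by rewrite addsmx_sub aK bK.
have rab : (1 < \rank (a + b)%MS)%N.
  have := ltn_leqif (mxrank_leqif_sup (addsmxSl a b)).
  rewrite rank_rV a0 => ->; apply/negP => sab; move/negP: nba; apply.
  exact: submx_trans (addsmxSr a b) sab.
have Kab : (kermx D <= a + b)%MS.
  rewrite -(geq_leqif (mxrank_leqif_sup abK)) r2; exact: rab.
have span_orth : forall z : 'rV[R]_n, bil B z a = 0 -> bil B z b = 0 ->
    forall s, (s <= kermx D)%MS -> bil B z s = 0.
  move=> z za zb s sK; have := submx_trans sK Kab.
  case/sub_addsmxP => [[u1 u2] /= ->].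
  by rewrite (mx11_scalar u1) (mx11_scalar u2) !mul_scalar_mx bilDr !bilZr za zb !mulr0 addr0.
have qb : bil B b b != 0.
  apply/negP => /eqP qb; move/negP: b0; apply; apply/eqP.
  apply: (@nondeg_ker X 1 b iso ee H1); first exact/sub_kermxP.
  exact: span_orth.
have aX := Dv a (elimT sub_kermxP aK).
have bX := Dv b (elimT sub_kermxP bK).
set H := refl a *m refl b *m X.
have iH : H *m B *m H^T = B.
  by apply: iso_mul => //; apply: iso_mul; apply: refl_iso.
have dH : \det H = 1 by rewrite !det_mulmx !refl_det // dX mulr1 mulN1r opprK.
have /eqP := det_minus1 _ iH dH on; case/det0P => v v0.
rewrite mulmxBr mulmx1 => /eqP; rewrite subr_eq0 => /eqP vH.
set al := 2 / bil B a a * bil B v a.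
set ga := 2 / bil B b b * bil B (v - al *: a) b.
have vD : v *m D = al *: a + ga *: b.
  move: vH; rewrite /H !mulmxA refl_act refl_act -/al -/ga !mulmxBl -!scalemxAl aX bX => vH.
  rewrite /D mulmxBr mulmx1; rewrite -{2}vH.
  by rewrite opprB opprB addrCA [v *m X + _]addrCA subrr addr0 addrC.
have vD0 : v *m D = 0.
  apply: H1; rewrite vD mulmxDl -!scalemxAl.
  by rewrite (sub_kermxP aK) (sub_kermxP bK) !scaler0 addr0.
have ala : bil B (al *: a + ga *: b) a = 0 by rewrite -vD vD0 bil0l.
have alb : bil B (al *: a + ga *: b) b = 0 by rewrite -vD vD0 bil0l.
move: ala; rewrite bilDl !bilZl ba mulr0 addr0 => ala.
move: alb; rewrite bilDl !bilZl ab mulr0 add0r => alb.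
move/eqP: ala; rewrite mulf_eq0 (negPf qa) orbF => /eqP al0.
move/eqP: alb; rewrite mulf_eq0 (negPf qb) orbF => /eqP ga0.
move/eqP: al0; rewrite /al mulf_eq0 mulf_eq0 invr_eq0 (negPf two) (negPf qa) /= => /eqP va.
move/eqP: ga0; rewrite /ga bilBl bilZl ab mulr0 subr0.
rewrite mulf_eq0 mulf_eq0 invr_eq0 (negPf two) (negPf qb) /= => /eqP vb.
move/negP: v0; apply; apply/eqP.
apply: (@nondeg_ker X 1 v iso ee H1 vD0).
exact: span_orth.
Qed.

Lemma ker_le2 X eps :
  (forall p0 p1 : R, exists t : R, t ^+ 2 = p0 + p1 * t) ->
  X *m B *m X^T = B -> eps * eps = 1 ->
  (forall u : 'M[R]_n, u *m B *m u^T = B -> \det u = 1 -> (u - 1%:M) ^+ 3 = 0 ->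
     u *m X = X *m u -> u = 1%:M) ->
  (\rank (kermx (X - eps%:M)) <= 2)%N.
Proof.
move=> rootH iso ee reg; rewrite leqNgt; apply/negP => r3.
set S := kermx (X - eps%:M) in r3 *.
have [|a aS a0] := @pick_vec n n S 0; first by rewrite mxrank0; lia.
rewrite submx0 in a0.
have [|b bS nba] := @pick_vec n 1 S a.
  by have := rank_leq_row a; lia.
have b0 : b != 0 by apply/negP => /eqP b0; move: nba; rewrite b0 sub0mx.
have [e [eS e0 qe]] : exists e : 'rV[R]_n, [/\ (e <= S)%MS, e != 0 & bil B e e = 0].
  case: (eqVneq (bil B b b) 0) => qb; first by exists b.
  have [t ht] := rootH (- bil B a a / bil B b b) (- (2 * bil B a b) / bil B b b).
  exists (a + t *: b); split.
  - by rewrite addmx_sub // scalemx_sub.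
  - apply/negP => /eqP h.
    case: (eqVneq t 0) => [t0 | t0].
      by move: h; rewrite t0 scale0r addr0 => h; rewrite h eqxx in a0.
    move/negP: nba; apply.
    have -> : b = (- t^-1) *: a.
      apply: (scalerI t0); rewrite scalerA mulrN mulfV // scaleN1r.
      by apply/eqP; rewrite -addr_eq0 addrC h.
    by rewrite scalemx_sub.
  - rewrite bilDl !bilDr !bilZl !bilZr (@bil_sym B b a sB).
    have e2 : t * (t * bil B b b) = - bil B a a - 2 * t * bil B a b.
      by rewrite mulrA -expr2 ht; field.
    by rewrite e2; ring.
set T := (S :&: kermx (B *m e^T))%MS.
have rT : (1 < \rank T)%N.
  have := mxrank_sum_cap S (kermx (B *m e^T)).
  rewrite [\rank (kermx (B *m e^T))]mxrank_ker.
  have h1 := rank_leq_col (B *m e^T).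
  have h2 := rank_leq_col (S + kermx (B *m e^T))%MS.
  rewrite -/T => eq; lia.
have [|x xT nxe] := @pick_vec n 1 T e.
  by have := rank_leq_row e; lia.
have xS : (x <= S)%MS := submx_trans xT (capmxSl _ _).
have xe : bil B x e = 0.
  have /sub_kermxP xBe := submx_trans xT (capmxSr _ _).
  by rewrite /bil -mulmxA xBe mxE.
have ex : bil B e x = 0 by rewrite (@bil_sym B e x sB).
have eX : e *m X = eps *: e by apply/eqP; rewrite -eigE; apply/eqP/sub_kermxP.
have xX : x *m X = eps *: x by apply/eqP; rewrite -eigE; apply/eqP/sub_kermxP.
have [u [iu du u3 uX un1]] := @unip_core X eps e x iso ee eX xX qe ex e0 nxe.
by move/negP: un1; apply; apply/eqP; apply: reg.
Qed.

End Orth.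
End Gen.

Lemma two_neq0 (F : finFieldType) : odd #|F| -> (2 : F) != 0.
Proof.
move=> oF; apply/negP => /eqP h2.
have o2 : (#[(1%R : F)]%g %| 2)%N.
  by rewrite order_dvdn FinRing.zmodXgE FinRing.zmod1gE; apply/eqP.
have o1 : #[(1%R : F)]%g != 1%N by rewrite order_eq1 FinRing.zmod1gE oner_neq0.
have d : (#[(1%R : F)]%g %| #|[set: F]|)%N by apply: order_dvdG; rewrite inE.
rewrite cardsT in d.
have e : #[(1%R : F)]%g = 2%N.
  have h := dvdn_leq (isT : (0 < 2)%N) o2.
  by move: o1 o2 h; case: (#[_]%g) => [|[|[|]]].
by move: d; rewrite e dvdn2 oF.
Qed.

Lemma SO_group (F : finFieldType) n (B : 'M[F]_n.+1) : group_set (SO_set B).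
Proof.
apply/group_setP; split.
  by rewrite inE GL_1E mul1mx trmx1 mulmx1 eqxx det1 eqxx.
move=> x y; rewrite !inE => /andP [/eqP hx /eqP dx] /andP [/eqP hy /eqP dy].
rewrite GL_MxE trmx_mul det_mulmx dx dy mulr1 eqxx andbT.
have -> : GLval x *m GLval y *m B *m ((GLval y)^T *m (GLval x)^T)
  = GLval x *m (GLval y *m B *m (GLval y)^T) *m (GLval x)^T by rewrite !mulmxA.
by rewrite hy hx.
Qed.

Lemma Omega_SO (F : finFieldType) n (B : 'M[F]_n.+1) g :
  g \in Omega_set B -> g \in SO_set B.
Proof.
move=> gO; have := der1_subG (Group (@SO_group _ _ B)).
by move/subsetP/(_ g gO).
Qed.

Theorem mainTheorem16 (F : finFieldType) (m : nat) (B : 'M[F]_((m.*2).+1))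
  (g : {'GL_((m.*2).+1)[F]}) :
  odd #|F| -> B^T = B -> B \in unitmx ->
  g \in Omega_set B ->
  regular_semisimple B (GLval g) ->
  (exists v0 : 'rV[F]_((m.*2).+1),
      [/\ v0 != 0, qform B v0 != 0, v0 *m GLval g = v0,
          \rank (fixed_space (GLval g)) = 1%N &
          (forall v, stab_nondeg_line B (GLval g) v -> (v <= v0)%MS)
          \/
          (exists W : 'M[F]_(2, (m.*2).+1),
             [/\ \rank W = 2%N, W *m B *m W^T \in unitmx,
                 W *m GLval g = - W &
                 forall v, stab_nondeg_line B (GLval g) v ->
                   (v <= v0)%MS \/ (v <= W)%MS])]).
Proof.
move=> oF sB uB gO reg.
have two := @two_neq0 F oF.
have /andP [/eqP iso /eqP dG] :
    (GLval g *m B *m (GLval g)^T == B) && (\det (GLval g) == 1).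
  by have := @Omega_SO _ _ B g gO; rewrite inE.
set G := GLval g in iso dG *.
set K := closureF F.
set f := toClosure F.
set Gk := map_mx f G.
set Bk := map_mx f B.
have sBk : Bk^T = Bk by rewrite /Bk map_trmx sB.
have uBk : Bk \in unitmx by rewrite map_unitmx.
have twoK : (2 : K) != 0 by rewrite -(rmorph_nat f 2) fmorph_eq0.
have isoK : Gk *m Bk *m Gk^T = Bk by rewrite /Gk /Bk map_trmx -!map_mxM iso.
have dGk : \det Gk = 1 by rewrite det_map_mx dG rmorph1.
have oN : odd (m.*2).+1 by rewrite /= odd_double.
have [diagG regG] := reg.
have P1K := fun eps : K => @diag_P1 K _ Gk eps diagG.
have regK : forall u : 'M[K]_((m.*2).+1), u *m Bk *m u^T = Bk -> \det u = 1 ->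
    (u - 1%:M) ^+ 3 = 0 -> u *m Gk = Gk *m u -> u = 1%:M.
  by move=> u iu du u3 uc; apply: regG => //; exists 3%N.
have rootK : forall p0 p1 : K, exists t : K, t ^+ 2 = p0 + p1 * t.
  move=> p0 p1.
  have [t ht] := @solve_monicpoly K 2 (fun i => if i == 0%N then p0 else p1) isT.
  exists t; rewrite ht !big_ord_recl big_ord0 /= expr0 mulr1 expr1 addr0.
  by [].
have ee1 : forall R : fieldType, (1 : R) * 1 = 1 by move=> R; rewrite mulr1.
have eem1 : forall R : fieldType, (-1 : R) * -1 = 1 by move=> R; rewrite mulN1r opprK.
have le1 := @ker_le2 K _ Bk sBk uBk twoK Gk 1 rootK isoK (ee1 K) regK.
have r1K := @kerm1_is1 K _ Bk sBk uBk twoK Gk isoK dGk oN (P1K 1) le1.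
have lem1 := @ker_le2 K _ Bk sBk uBk twoK Gk (-1) rootK isoK (eem1 K) regK.
have n1K := @kerp1_not1 K _ Bk sBk uBk twoK Gk isoK dGk (P1K (-1)).
have mapD : forall eps : F, map_mx f (G - eps%:M) = Gk - (f eps)%:M.
  by move=> eps; rewrite map_mxB map_scalar_mx.
have rk : forall eps : F, \rank (kermx (G - eps%:M)) = \rank (kermx (Gk - (f eps)%:M)).
  by move=> eps; rewrite !mxrank_ker -mapD mxrank_map.
have P1F : forall eps : F, forall v : 'rV[F]_((m.*2).+1),
    v *m (G - eps%:M) *m (G - eps%:M) = 0 -> v *m (G - eps%:M) = 0.
  move=> eps v h; apply/eqP; rewrite -(map_mx_eq0 f) map_mxM mapD; apply/eqP; apply: P1K.
  by rewrite -mapD -!map_mxM h map_mx0.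
have r1 : \rank (kermx (G - 1%:M)) = 1%N by rewrite rk rmorph1 r1K.
have rm1 : \rank (kermx (G - (-1)%:M)) = 0%N \/ \rank (kermx (G - (-1)%:M)) = 2%N.
  rewrite rk rmorphN1; move: lem1 n1K; case: (\rank _) => [|[|[|]]] //; auto.
have [|v0 v0K v00] := @pick_vec F _ _ _ (kermx (G - 1%:M)) (0 : 'M[F]_((m.*2).+1)).
  by rewrite mxrank0 r1.
rewrite submx0 in v00.
have v0D : v0 *m (G - 1%:M) = 0 by apply/sub_kermxP.
have v0G : v0 *m G = v0 by apply/eqP; rewrite -{2}(scale1r v0) -eigE v0D.
have K1 := @line_span F _ v0 _ _ v0K v00 r1.
have qv0 : qform B v0 != 0.
  apply/negP => /eqP q0; move/negP: v00; apply; apply/eqP.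
  apply: (@nondeg_ker F _ B uB G 1 v0 iso (ee1 F) (P1F 1) v0D) => s sK.
  have /sub_rVP [k ->] := submx_trans sK K1.
  have q0' : bil F _ B v0 v0 = 0 := q0.
  by rewrite bilZr q0' mulr0.
have stab : forall v, stab_nondeg_line B G v ->
    v *m (G - 1%:M) = 0 \/ v *m (G - (-1)%:M) = 0.
  move=> v [vn0 [qv /sub_rVP [k ek]]].
  have qv' : bil F _ B v v != 0 := qv.
  have qq : bil F _ B (v *m G) (v *m G) = bil F _ B v v := @bil_iso F _ B G v v iso.
  move: qq; rewrite ek bilZl bilZr mulrA => /eqP.
  rewrite -subr_eq0 -{2}(mul1r (bil F _ B v v)) -mulrBl mulf_eq0 (negPf qv') orbF.
  rewrite subr_eq0 -expr2 sqrf_eq1 => /orP [] /eqP k1; [left|right];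
    by apply/eqP; rewrite eigE ek k1.
case: rm1 => r2.
- exists v0; split => //; left => v hv.
  case: (stab v hv) => vD.
    by apply: submx_trans K1; apply/sub_kermxP.
  exfalso; have [vn0 _] := hv; move/negP: vn0; apply.
  have : (v <= kermx (G - (-1)%:M))%MS by apply/sub_kermxP.
  by move/eqP: r2; rewrite mxrank_eq0 => /eqP ->; rewrite submx0.
- set S2 := kermx (G - (-1)%:M) in r2 *.
  pose W := castmx (r2, erefl (m.*2).+1) (row_base S2) : 'M[F]_(2, (m.*2).+1).
  have WS : (W :=: S2)%MS := eqmx_trans (eqmx_cast _ _) (eq_row_base S2).
  exists v0; split => //; right; exists W; split.
  + by rewrite WS r2.
  + rewrite unitmxE unitfE; apply/negP => /det0P [c c0 cW].
    have WD : W *m (G - (-1)%:M) = 0 by apply/sub_kermxP; rewrite WS submx_refl.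
    set y := c *m W.
    have yD : y *m (G - (-1)%:M) = 0 by rewrite /y -mulmxA WD mulmx0.
    have y0 : y = 0.
      apply: (@nondeg_ker F _ B uB G (-1) y iso (eem1 F) (P1F (-1)) yD) => s sK.
      have : (s <= W)%MS by rewrite WS.
      case/submxP => d ->.
      rewrite /bil /y trmx_mul.
      have -> : c *m W *m B *m (W^T *m d^T) = c *m (W *m B *m W^T) *m d^T by rewrite !mulmxA.
      by rewrite cW mul0mx mxE.
    move/negP: c0; apply.
    have rfW : row_free W by rewrite /row_free WS r2.
    by rewrite -(mulmx_free_eq0 _ rfW) -/y y0.
  + have WD : W *m (G - (-1)%:M) = 0 by apply/sub_kermxP; rewrite WS submx_refl.
    move: WD.
    rewrite mulmxBr mul_mx_scalar scaleN1r opprK => /eqP; rewrite addr_eq0 => /eqP //.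
  + move=> v hv; case: (stab v hv) => vD; [left|right].
      by apply: submx_trans K1; apply/sub_kermxP.
    by rewrite WS; apply/sub_kermxP.
Qed.
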